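(* Let $n\ge 3$ and let $\mathcal X$ be an $(n,n-2)$-set of $\mathrm{PG}(n,q)$. Then $$|\mathcal X|\le \left(\frac{n!\,(q^{n+1}-1)(q^n-1)}{(q-1)(q^2-1)}\right)^{\frac{1}{n-1}}+n-2 .$$
   Context: $q$ is a prime power and $\mathrm{PG}(n,q)$ is the $n$-dimensional projective space over $\mathbb F_q$. For integers $r,s$, an $(r,s)$-set of $\mathrm{PG}(n,q)$ is a set $\mathcal X$ of points such that: (i) every $s$-dimensional projective subspace contains at most $r$ points of $\mathcal X$; (ii) $\mathcal X$ spans $\mathrm{PG}(n,q)$; (iii) some $(s+1)$-dimensional projective subspace contains $r+2$ points of $\mathcal X$. *)

(* Defs.v *)
From HB Require Import structures.
From mathcomp Require Import all_boot all_order all_algebra.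
From mathcomp Require Import reals exp.
Set Implicit Arguments. Unset Strict Implicit. Unset Printing Implicit Defensive.
Import Order.TTheory GRing.Theory Num.Theory.
Local Open Scope ring_scope.

(* PG(n,q) is the projective geometry of the row space 'rV[F]_(n.+1) over a
   finite field F with #|F| = q.  A point is a 1-dimensional subspace; we
   represent a set of points by a set of nonzero representative vectors, no
   two of which span the same line. *)
Definition point_set (F : finFieldType) (n : nat) (X : {set 'rV[F]_n.+1}) : Prop :=
  (forall x, x \in X -> x != 0) /\
  (forall x y, x \in X -> y \in X -> (x <= y)%MS -> x = y).

(* A projective subspace of (projective) dimension s is the row space of a
   matrix U of rank s+1; the points of X lying in it: *)
Definition pts_in (F : finFieldType) (n : nat) (X : {set 'rV[F]_n.+1})
  (U : 'M[F]_n.+1) : {set 'rV[F]_n.+1} := [set x in X | (x <= U)%MS].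

Definition rs_set (F : finFieldType) (n r s : nat) (X : {set 'rV[F]_n.+1}) : Prop :=
  [/\ point_set X,
      (forall U : 'M[F]_n.+1, \rank U = s.+1 -> (#|pts_in X U| <= r)%N),
      \rank (\sum_(x in X) <<x>>)%MS = n.+1 &
      exists U : 'M[F]_n.+1, \rank U = s.+2 /\ (r.+2 <= #|pts_in X U|)%N].

(* Main.v *)
Require Import Defs.
From HB Require Import structures.
From mathcomp Require Import all_boot all_order all_algebra.
From mathcomp Require Import reals exp.
From mathcomp Require Import zify ring lra.
Import Order.TTheory GRing.Theory Num.Theory.
Local Open Scope ring_scope.
Lemma card_fr (F : finFieldType) n m : (m <= n)%N ->
  #|[pred A : 'M[F]_(m, n) | \rank A == m]| = (\prod_(0 <= i < m) (#|F| ^ n - #|F| ^ i))%N.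
Proof.
set p := #|F|.
pose fr m := [pred A : 'M[F]_(m, n) | \rank A == m].
elim: m => [_ | m IHm /ltnW-le_mn].
  rewrite (@eq_card1 _ (0 : 'M_(0, n))) ?big_geq //= => A.
  by rewrite flatmx0 !inE mxrank.unlock !eqxx.
rewrite big_nat_recr // -{}IHm //=.
rewrite -sum_nat_const /= -sum1_card -add1n.
rewrite (partition_big dsubmx (fr m)) /= => [|A]; last first.
  rewrite !inE -{1}(vsubmxK A); move: {A}(_ A) (_ A) => Ad Au Afull.
  rewrite eqn_leq rank_leq_row -(leq_add2l (\rank Au)) -mxrank_sum_cap.
  rewrite {1 3}[@mxrank]lock addsmxE (eqnP Afull) -lock -addnA.
  by rewrite leq_add ?rank_leq_row ?leq_addr.
apply: eq_bigr => A rAm; rewrite (reindex (col_mx^~ A)) /=; last first.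
  exists usubmx => [v _ | vA]; first by rewrite col_mxKu.
  by case/andP=> _ /eqP <-; rewrite vsubmxK.
transitivity #|~: [set v *m A | v in 'rV_m]|; last first.
  rewrite cardsCs setCK card_imset ?card_mx ?card_ord ?mul1n //.
  have [B AB1] := row_freeP rAm; apply: can_inj (mulmx^~ B) _ => v.
  by rewrite -mulmxA AB1 mulmx1.
rewrite -sum1_card; apply: eq_bigl => v; rewrite !inE col_mxKd eqxx.
rewrite andbT eqn_leq rank_leq_row /= -(leq_add2r (\rank (v :&: A)%MS)).
rewrite -addsmxE mxrank_sum_cap (eqnP rAm) addnAC leq_add2r.
rewrite (ltn_leqif (mxrank_leqif_sup _)) ?capmxSl // sub_capmx submx_refl.
by congr (~~ _); apply/submxP/imsetP=> [] [u]; exists u.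
Qed.

Lemma ffact_ge k m : ((m.+1 - k) ^ k <= m ^_ k)%N.
Proof.
elim: k m => [|k IH] m; first by rewrite ffactn0.
rewrite ffactnS; case: m => [|m]; first by rewrite subSS sub0n exp0n.
rewrite subSS expnSr mulnC; apply: leq_mul; first by rewrite leq_subr.
exact: IH.
Qed.

Definition ann {F : finFieldType} {n : nat} (A : 'M[F]_(2, n.+1)) (S : {set 'rV[F]_n.+1}) : bool :=
  [forall x in S, x *m A^T == 0].

Lemma rank_sum_le {F : finFieldType} {n : nat} (S : {set 'rV[F]_n.+1}) :
  (\rank (\sum_(x in S) <<x>>)%MS <= #|S|)%N.
Proof.
rewrite -sum1_card.
elim/big_rec2: _ => [|x s B _ IH]; first by rewrite mxrank0.
apply: leq_trans (mxrank_adds_leqif _ _).1 _.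
by rewrite genmxE leq_add // rank_leq_row.
Qed.

Lemma lower {F : finFieldType} {n : nat} (S : {set 'rV[F]_n.+1}) : (0 < n)%N -> (#|S| <= n.-1)%N ->
  (#|[pred B : 'M[F]_(2, 2) | \rank B == 2]| <=
   #|[set A : 'M[F]_(2, n.+1) | (\rank A == 2) && ann A S]|)%N.
Proof.
move=> n0 hS.
set MS := (\sum_(x in S) <<x>>)%MS.
set K := kermx MS^T.
have rK : (2 <= \rank K)%N.
  rewrite /K mxrank_ker mxrank_tr.
  have := rank_sum_le S; rewrite -/MS => h.
  apply: leq_trans (leq_sub2l _ (leq_trans h hS)); move: n0; clear; lia.
pose E := (pid_mx 2 : 'M[F]_(2, \rank K)) *m row_base K.
have rE : \rank E = 2.
  by rewrite mxrankMfree ?row_base_free // rank_pid_mx.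
have EK : (E <= K)%MS by rewrite -(eq_row_base K) submxMl.
have EMS : E *m MS^T = 0 by apply/eqP; rewrite -sub_kermx.
have [E' EE'] : exists E', E *m E' = 1%:M by apply/row_freeP; rewrite /row_free rE.
rewrite -(card_in_imset (f := fun B => B *m E) (D := [pred B : 'M[F]_(2, 2) | \rank B == 2])).
  apply: subset_leq_card; apply/subsetP => _ /imsetP[B hB ->].
  rewrite inE mxrankMfree; last by rewrite /row_free rE.
  rewrite (eqP hB) eqxx /=.
  apply/forallP => x; apply/implyP => xS.
  have /submxP[w ->] : (x <= MS)%MS.
    by apply: (sumsmx_sup x) => //; rewrite genmxE.
  rewrite trmx_mul mulmxA -(mulmxA w) -[MS](trmxK MS) -trmx_mul EMS.
  by rewrite trmx0 mulmx0 mul0mx.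
move=> B1 B2 _ _ h; have {}h : B1 *m E = B2 *m E := h.
by have := congr1 (mulmx^~ E') h; rewrite /= -(mulmxA B1) -(mulmxA B2) EE' !mulmx1.
Qed.

Lemma sum_card (T : finType) (p q : pred T) :
  (\sum_(i | p i) (q i : nat))%N = #|[set i | p i && q i]|.
Proof.
rewrite -sum1_card [RHS](eq_bigl (fun i => p i && q i)); last by move=> i; rewrite inE.
rewrite big_mkcondr /=; apply: eq_bigr => i _.
by case: (q i).
Qed.

Lemma upper {F : finFieldType} {n : nat} (X : {set 'rV[F]_n.+1})
  (hX : forall U : 'M[F]_n.+1, \rank U = (n - 2).+1 -> (#|pts_in X U| <= n)%N)
  (n3 : (3 <= n)%N) (A : 'M[F]_(2, n.+1)) : \rank A == 2 ->
  (#|[set S | (S \in [set S : {set 'rV[F]_n.+1} | S \subset X & #|S| == n.-1]) && ann A S]| <= n)%N.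
Proof.
move=> hA.
set U := kermx A^T.
have rU : \rank U = (n - 2).+1 by rewrite mxrank_ker mxrank_tr (eqP hA); move: n3; clear; lia.
apply: (@leq_trans #|[set S : {set 'rV[F]_n.+1} | S \subset pts_in X U & #|S| == n.-1]|).
  apply: subset_leq_card; apply/subsetP => S; rewrite !inE => /andP[/andP[SX Sk] aS].
  rewrite Sk andbT; apply/subsetP => x xS; rewrite /pts_in inE (subsetP SX x xS) /= sub_kermx.
  by move/forallP: aS => /(_ x); rewrite xS.
rewrite cards_draws; apply: leq_trans (leq_bin2l _ (hX U rU)) _.
by case: (n) n3 => // m _; rewrite binSn.
Qed.

Lemma dcount {F : finFieldType} {n : nat} (X : {set 'rV[F]_n.+1})
  (hX : forall U : 'M[F]_n.+1, \rank U = (n - 2).+1 -> (#|pts_in X U| <= n)%N)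
  (n3 : (3 <= n)%N) :
  ('C(#|X|, n.-1) * #|[pred B : 'M[F]_(2, 2) | \rank B == 2]| <=
   n * #|[pred A : 'M[F]_(2, n.+1) | \rank A == 2]|)%N.
Proof.
set P := [set S : {set 'rV[F]_n.+1} | S \subset X & #|S| == n.-1].
rewrite -cards_draws -/P.
have e : (\sum_(S in P) \sum_(A | \rank A == 2) (ann A S : nat) =
          \sum_(A | \rank A == 2) \sum_(S in P) (ann A S : nat))%N
  by apply: exchange_big.
apply: (@leq_trans (\sum_(S in P) \sum_(A | \rank A == 2) (ann A S : nat))).
  rewrite -sum_nat_const; apply: leq_sum => S; rewrite inE => /andP[_ /eqP Sk].
  rewrite sum_card; apply: lower; first by move: n3; clear; lia.
  by rewrite Sk.
rewrite e mulnC -sum_nat_const; apply: leq_sum => A hA.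
by rewrite sum_card; apply: upper.
Qed.

Theorem mainTheorem1 (F : finFieldType) (R : realType) (n : nat)
  (X : {set 'rV[F]_n.+1}) :
  (3 <= n)%N -> rs_set n (n - 2)%N X ->
  let q : R := (#|F|)%:R in
  (#|X|)%:R <=
    powR ((n`!)%:R * (q ^+ n.+1 - 1) * (q ^+ n - 1) / ((q - 1) * (q ^+ 2 - 1)))
         ((n.-1)%:R^-1) + (n - 2)%N%:R.
Proof.
move=> n3 [_ hX _ _]; rewrite /=; set q : R := (#|F|)%:R.
have D := dcount X hX n3.
rewrite (card_fr F 2 2 (leqnn 2)) (card_fr F n.+1 2 (ltnW (ltnW n3))) in D.
have pr (p j : nat) : (\prod_(0 <= i < 2) (p ^ j - p ^ i) = (p ^ j - 1) * (p ^ j - p))%N.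
  by rewrite big_ltn // big_nat1 expn0 expn1.
rewrite !pr in D.
have p2 : (1 < #|F|)%N := card_finNzRing_gt1 F.
have q2 : 1 < q by rewrite /q ltr1n.
move: D p2 q2; rewrite /q; set p := #|F|; move=> D p2 q2.
set m := #|X|.
set k := n.-1.
have hk : n = k.+1 by rewrite /k; move: n3; clear; lia.
have Hf := ffact_ge k m; rewrite -bin_ffact in Hf.
set a := (m.+1 - k)%N.
have key : (a ^ k * ((p ^ 2 - 1) * (p ^ 2 - p)) <= k`! * (n * ((p ^ n.+1 - 1) * (p ^ n.+1 - p))))%N.
  apply: leq_trans (leq_mul Hf (leqnn _)) _.
  by rewrite [(_ * k`!)%N]mulnC -mulnA leq_mul2l D orbT.
have e1 j : ((p ^ j - 1)%:R : R) = p%:R ^+ j - 1.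
  by rewrite natrB ?natrX // expn_gt0 (ltnW p2).
have e2 j : (0 < j)%N -> ((p ^ j - p)%:R : R) = p%:R ^+ j - p%:R.
  by move=> j0; rewrite natrB ?natrX // -{1}(expn1 p) leq_pexp2l // ltnW.
have keyR : (a%:R : R) ^+ k * ((p%:R ^+ 2 - 1) * (p%:R ^+ 2 - p%:R)) <=
    (k`!)%:R * (n%:R * ((p%:R ^+ n.+1 - 1) * (p%:R ^+ n.+1 - p%:R))).
  by move: key; rewrite -(ler_nat R) !natrM natrX !e1 !e2.
have fn : ((n`!)%:R : R) = n%:R * (k`!)%:R by rewrite hk factS natrM.
move: keyR q2 fn; set r : R := p%:R; move=> keyR q2 fn.
have [small|big] := leqP m (n - 2).
  apply: le_trans (_ : (n - 2)%:R <= _); first by rewrite ler_nat.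
  by rewrite lerDr powR_ge0.
have ma : m = (a + (n - 2))%N by rewrite /a; move: big hk n3; clear; lia.
rewrite ma natrD lerD2r.
have a0 : (0:R) <= a%:R by [].
have k0 : (k%:R : R) != 0 by rewrite pnatr_eq0 -lt0n; move: hk n3; clear; lia.
have bound : (a%:R : R) ^+ k <=
    n`!%:R * (r ^+ n.+1 - 1) * (r ^+ n - 1) / ((r - 1) * (r ^+ 2 - 1)).
  have rpos : 0 < (r - 1) * (r ^+ 2 - 1).
    by apply: mulr_gt0; rewrite subr_gt0 ?expr2; [exact: q2 | nra].
  rewrite ler_pdivlMr //.
  rewrite fn !exprS expr0 mulr1 in keyR *.
  have r0 : 0 < r by apply: lt_trans q2.
  rewrite -(ler_pM2r r0).
  have -> : a%:R ^+ k * ((r - 1) * (r * r - 1)) * r =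
      a%:R ^+ k * ((r * r - 1) * (r * r - r)) by ring.
  have -> : n%:R * k`!%:R * (r * r ^+ n - 1) * (r ^+ n - 1) * r =
      k`!%:R * (n%:R * ((r * r ^+ n - 1) * (r * r ^+ n - r))) by ring.
  exact: keyR.
have -> : (a%:R : R) = powR (a%:R ^+ k) (k%:R^-1).
  by rewrite -powR_mulrn // -powRrM mulfV // powRr1.
apply: ge0_ler_powR => //; first by rewrite invr_ge0.
  by rewrite nnegrE exprn_ge0.
by rewrite nnegrE (le_trans _ bound) // exprn_ge0.
Qed.
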